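(* Let $S$ be a numerical semigroup minimally generated by $n_1<\cdots<n_e$, with conductor $c$. Let $m\ge 2c-1$, let $M=\{m=m_1<\cdots<m_r\}$ be an $(S,m,r)$-amenable set, and let $L=M\cap[m,m+n_e)$. Then $\mathrm D(M)=(M\setminus L)\cup\mathrm D(L)$, and moreover $\sharp\mathrm D(M)=\sharp(M\setminus L)+\sharp\mathrm D(L)$.
   Context: A numerical semigroup is a submonoid of $\mathbb N$ with finite complement; its conductor $c$ is the least element of $S$ such that $c+n\in S$ for all $n\in\mathbb N$. For $x\in S$, $\mathrm D(x)=\{\alpha\in S\mid x-\alpha\in S\}$ and for $A\subseteq S$, $\mathrm D(A)=\bigcup_{x\in A}\mathrm D(x)$. A set $M=\{m_1<\cdots<m_r\}\subseteq S$ with $2c-1\le m=m_1$ is $(S,m,r)$-amenable if $\mathrm D(m_i)\cap[m,\infty)\subseteq M$ for all $i$. *)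

(* Defs.v *)
From mathcomp Require Import all_boot all_order.
Set Implicit Arguments. Unset Strict Implicit. Unset Printing Implicit Defensive.

Definition numerical_semigroup (S : pred nat) : Prop :=
  [/\ S 0,
      (forall x y, S x -> S y -> S (x + y)) &
      exists b, forall n, b <= n -> S n].

Inductive gen_by (g : seq nat) : nat -> Prop :=
| gen_by0 : gen_by g 0
| gen_byS x y : y \in g -> gen_by g x -> gen_by g (y + x).

Definition minimally_generated (S : pred nat) (gens : seq nat) : Prop :=
  [/\ sorted ltn gens,
      (forall x, S x <-> gen_by gens x) &
      forall y, y \in gens -> ~ gen_by [seq z <- gens | z != y] y].

Definition is_conductor (S : pred nat) (c : nat) : Prop :=
  [/\ S c, (forall n, S (c + n)) &
      forall c', S c' -> (forall n, S (c' + n)) -> c <= c'].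

Definition Dx (S : pred nat) (x alpha : nat) : bool :=
  [&& S alpha, alpha <= x & S (x - alpha)].

(* D(A) = union of D(x), x in A, as an explicit (duplicate-free) list;
   every element of D(x) is <= x, so it suffices to scan [0, max A]. *)
Definition DA (S : pred nat) (A : seq nat) : seq nat :=
  [seq a <- iota 0 (\max_(x <- A) x).+1 | has (fun x => Dx S x a) A].

Definition amenable (S : pred nat) (c m r : nat) (M : seq nat) : Prop :=
  [/\ sorted ltn M, size M = r, head 0 M = m, 0 < r & all S M] /\
  (2 * c - 1 <= m)%N /\
  (forall x a, x \in M -> Dx S x a -> m <= a -> a \in M).

(* Main.v *)
Require Import Defs.
From mathcomp Require Import all_boot all_order.
From mathcomp Require Import zify.

Lemma le_max_seq (A : seq nat) x : x \in A -> x <= \max_(y <- A) y.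
Proof.
elim: A => [|y A IH] //=; rewrite inE big_cons => /orP [/eqP ->|/IH h].
  by rewrite leq_maxl.
by rewrite leq_max h orbT.
Qed.

Lemma memDA S A a : (a \in DA S A) = has (fun x => Dx S x a) A.
Proof.
rewrite /DA mem_filter mem_iota /=; apply: andb_idr => /hasP [x xA].
rewrite /Dx => /and3P [_ ax _]; rewrite add0n ltnS /=.
exact: ssrnat.leq_trans ax (@le_max_seq _ _ xA).
Qed.

Lemma gen_pos g y : gen_by g y -> 0 < y ->
  exists z rest, [/\ z \in g, 0 < z, gen_by g rest & y = z + rest].
Proof.
elim => [|x z zg gx IH] //= pos.
case: (posnP z) => [z0|zp]; last by exists z, x.
by subst z; apply: IH.
Qed.

Lemma path_le_last y s x : path ltn y s -> x \in y :: s -> x <= last y s.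
Proof.
elim: s y x => [|z s IH] y x /=; first by rewrite inE => _ /eqP ->.
move=> /andP [yz ps]; rewrite inE => /orP [/eqP ->|xs].
  apply: leq_trans (ltnW yz) _; apply: IH => //; exact: mem_head.
exact: IH.
Qed.

Lemma sorted_le_last (s : seq nat) x : sorted ltn s -> x \in s -> x <= last 0 s.
Proof. case: s => [|y s] //= pth xs; exact: path_le_last pth xs. Qed.

Lemma head_min (M : seq nat) x : sorted ltn M -> x \in M -> head 0 M <= x.
Proof.
case: M => [|y M'] //= pM.
rewrite inE => /orP [/eqP -> //|xM].
by have /allP := order_path_min ltn_trans pM; move/(_ x xM)/ltnW.
Qed.

Theorem lemma3p10 (S : pred nat) (gens : seq nat) (c m r : nat) (M : seq nat) :
  numerical_semigroup S ->
  minimally_generated S gens ->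
  is_conductor S c ->
  2 * c - 1 <= m ->
  amenable S c m r M ->
  let ne := last 0 gens in
  let L := [seq x <- M | (m <= x) && (x < m + ne)] in
  let MminusL := [seq x <- M | x \notin L] in
  (DA S M =i [predU MminusL & DA S L]) /\
  size (DA S M) = size MminusL + size (DA S L).
Proof.
move=> [S0 Sadd _] [sg Sgen _] _ _ [[sM _ hM r0 allS] [_ am]] ne L ML.
have Mge : forall x, x \in M -> m <= x.
  by move=> x; rewrite -hM; apply: head_min.
have memL : forall a, (a \in L) = (a \in M) && (m <= a < m + ne).
  by move=> a; rewrite mem_filter andbC.
have memML : forall a, (a \in ML) = (a \in M) && ~~ (m <= a < m + ne).
  by move=> a; rewrite mem_filter memL andbC; case: (a \in M).
have Sg : forall g, g \in gens -> S g.
  move=> g gg; apply/Sgen; rewrite -[g]addn0; constructor => //; constructor.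
have gle : forall g, g \in gens -> g <= ne.
  by move=> g; apply: sorted_le_last.
have Dself : forall x, S x -> Dx S x x by move=> x Sx; rewrite /Dx Sx leqnn subnn S0.
have key : forall n x a, x < n -> x \in M -> Dx S x a -> (a \in ML) || (a \in DA S L).
  elim=> [|n IH] x a xn xM Dxa //.
  - case/and3P: (Dxa) => Sa ax Sxa.
    case: (ltnP x (m + ne)) => xlt.
      apply/orP; right; rewrite memDA; apply/hasP; exists x => //.
      by rewrite memL xM Mge.
    case: (leqP m a) => ma.
      have aM := am x a xM Dxa ma.
      case: (ltnP a (m + ne)) => alt.
        apply/orP; right; rewrite memDA; apply/hasP; exists a; last exact: Dself.
        by rewrite memL aM ma alt.
      by apply/orP; left; rewrite memML aM negb_and -leqNgt alt orbT.
    have xap : 0 < x - a by rewrite subn_gt0; apply: leq_trans ma (leq_trans (leq_addr _ _) xlt).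
    have [g [rest [gg gp grest xe]]] := @gen_pos _ _ (proj1 (Sgen _) Sxa) xap.
    have Srest : S rest by apply/Sgen.
    have ge := gle g gg.
    have hxg : x - g = a + rest by lia.
    have xgM : x - g \in M.
      apply: (am x) => //; last by lia.
      rewrite /Dx hxg (Sadd _ _ Sa Srest) /=.
      have -> : x - (a + rest) = g by lia.
      by rewrite Sg // andbT; lia.
    apply: (IH (x - g)) => //; first by lia.
    rewrite /Dx Sa hxg leq_addr /=.
    by have -> : a + rest - a = rest by lia.
have sub1 : {subset DA S L <= DA S M}.
  move=> a; rewrite !memDA => /hasP [x xL Dxa]; apply/hasP; exists x => //.
  by move: xL; rewrite memL => /andP [].
have eqm : DA S M =i [predU ML & DA S L].
  move=> a; rewrite !inE; apply/idP/idP.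
    rewrite memDA => /hasP [x xM Dxa]; exact: (key x.+1 x a).
  case/orP => [aML|]; last exact: sub1.
  move: aML; rewrite memML => /andP [aM _]; rewrite memDA; apply/hasP; exists a => //.
  by apply: Dself; apply: (allP allS).
split => //.
have uML : uniq ML by apply: filter_uniq; apply: sorted_uniq sM; [exact: ltn_trans|exact: ltnn].
have uDA : forall A, uniq (DA S A) by move=> A; apply: filter_uniq; apply: iota_uniq.
have disj : forall a, a \in ML -> a \notin DA S L.
  move=> a; rewrite memML memDA => /andP [aM]; rewrite negb_and -leqNgt (Mge _ aM) /= => alt.
  apply/hasP => -[x]; rewrite memL => /andP [_ /andP [_ xlt]] /and3P [_ ax _]; lia.
rewrite -size_cat; apply: perm_size; apply: uniq_perm => //.
  by rewrite cat_uniq uML uDA andbT /=; apply/hasPn => a aD; apply/negP => /disj; rewrite aD.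
by move=> a; rewrite eqm mem_cat.
Qed.
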